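(* Consider the discrete-time linear system $x_{t+1}=Ax_t+Bu_t$, $t=0,\dots,T-1$, with $x_t\in\mathbb{R}^n$, $u_t\in\mathbb{R}^m$, finite horizon $T\in\mathbb{N}$, and random initial state $x_0\sim p_0$. Let $Q,Q_F\in\mathbb{R}^{n\times n}$ and $R\in\mathbb{R}^{m\times m}$ be symmetric positive definite, and let $\psi,\psi_F:\mathbb{R}^n\to\mathbb{R}$ be continuously differentiable, bounded from below, with $\psi(0)=\psi_F(0)=0$. Let $\mathcal{H}$ be a Hilbert space of measurable functions $\mathbb{R}^n\to\mathbb{R}^m$ with inner product $\langle\cdot,\cdot\rangle_{\mathcal H}$ and norm $\|\cdot\|_{\mathcal H}$. For a policy sequence $\pi_{0:T-1}=\{\pi_0,\dots,\pi_{T-1}\}$, $\pi_t\in\mathcal H$, with closed-loop inputs $u_t=\pi_t(x_t)$, define $V_T(x)=x^\top Q_Fx+\psi_F(x)$ and, for $t=T-1,\dots,0$, $$V_t(x)=x^\top Qx+\pi_t(x)^\top R\pi_t(x)+\psi(x)+V_{t+1}(Ax+B\pi_t(x)),$$ and the stage functional $$\tilde J_t(\pi_{t:T-1})=\mathbb{E}\big[x_t^\top Qx_t+\pi_t(x_t)^\top R\pi_t(x_t)+\psi(x_t)+V_{t+1}(Ax_t+B\pi_t(x_t))\big],$$ where the expectation is over the closed-loop state $x_t$ generated from $x_0\sim p_0$. For each $t$ and each fixed tail $\pi_{t+1:T-1}$, let $\overline{D\tilde J_t}(\cdot,\cdot,\pi_{t+1:T-1}):\mathcal H\times\mathcal H\to\mathcal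 H$ be a discrete Fréchet derivative of $\phi\mapsto\tilde J_t(\phi,\pi_{t+1:T-1})$, i.e. for all $\phi,\varphi\in\mathcal H$, $$\langle\phi-\varphi,\overline{D\tilde J_t}(\phi,\varphi,\pi_{t+1:T-1})\rangle_{\mathcal H}=\tilde J_t(\phi,\pi_{t+1:T-1})-\tilde J_t(\varphi,\pi_{t+1:T-1}),$$ and $\overline{D\tilde J_t}(\phi,\varphi,\pi_{t+1:T-1})\to D\tilde J_t(\varphi)$ (the Riesz representative of the Fréchet derivative at $\varphi$) as $\|\phi-\varphi\|_{\mathcal H}\to0$. Let $\delta>0$ and let policy sequences $\pi^k_{0:T-1}$, $k=0,1,2,\dots$, be generated by the implicit update, performed backward for $t=T-1,\dots,0$, $$\pi_t^{k+1}=\pi_t^k-\delta\,\overline{D\tilde J_t}\big(\pi_t^{k+1},\pi_t^k,\pi_{t+1:T-1}^{k+1}\big).$$ Then for every iteration $k$ and any $\delta>0$, $$\tilde J_0(\pi^{k+1}_{0:T-1})-\tilde J_0(\pi^k_{0:T-1})=-\frac{1}{\delta}\sum_{t=0}^{T-1}\|\pi_t^{k+1}-\pi_t^k\|_{\mathcal H}^2\le0.$$ Consequently, the sequence $\{\tilde J_0(\pi^k_{0:T-1})\}_{k\ge0}$ is monotonically non-increasing and converges as $k\to\infty$, and $\sum_{t=0}^{T-1}\|\pi_t^{k+1}-\pi_t^k\|_{\mathcal H}^2\to0$.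
   Context: This is a team (multi-agent) control problem: the stacked input $u_t$ collects the inputs of all team members, $B=[B_1\ \cdots\ B_N]$, and the team jointly minimizes the finite-horizon expected cost $\mathbb{E}[\sum_{t=0}^{T-1}(x_t^\top Qx_t+u_t^\top Ru_t+\psi(x_t))+x_T^\top Q_Fx_T+\psi_F(x_T)]$ over state-feedback policies in $\mathcal H$. The notation $\pi_{t:T-1}=(\pi_t,\pi_{t+1:T-1})$ denotes the tail of the policy sequence from time $t$. *)

(* Defs.v *)
From HB Require Import structures.
From mathcomp Require Import all_boot all_order all_algebra.
From mathcomp Require Import all_classical all_reals all_analysis.
Set Implicit Arguments. Unset Strict Implicit. Unset Printing Implicit Defensive.
Import Order.TTheory GRing.Theory Num.Theory.
Import numFieldNormedType.Exports.
Local Open Scope classical_set_scope.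
Local Open Scope ring_scope.

Definition cvec_display : measure_display. Proof. exact. Qed.

Section measurable_cvec.
Context (R : realType) (n : nat).
Let coors : 'I_n -> 'cV[R]_n -> R := fun i x => x i ord0.
Let s0 : g_sigma_preimage coors set0.
Proof. exact: sigma_algebra0. Qed.
Let sC A : g_sigma_preimage coors A -> g_sigma_preimage coors (~` A).
Proof. exact: sigma_algebraC. Qed.
Let sU (F : _^nat) : (forall i, g_sigma_preimage coors (F i)) ->
  g_sigma_preimage coors (\bigcup_i (F i)).
Proof. exact: sigma_algebra_bigcup. Qed.
HB.instance Definition _ := @isMeasurable.Build cvec_display
  'cV[R]_n (g_sigma_preimage coors) s0 sC sU.
End measurable_cvec.

Definition qf (R : realType) (n : nat) (M : 'M[R]_n) (x : 'cV[R]_n) : R :=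
  (x^T *m M *m x) ord0 ord0.

Definition sym_posdef (R : realType) (n : nat) (M : 'M[R]_n) : Prop :=
  M^T = M /\ forall x : 'cV[R]_n, x != 0 -> 0 < qf M x.

(* continuously differentiable f : R^n -> R  (differentiable everywhere and
   the differential x |-> Df(x) is continuous; in finite dimension this is
   continuity of x |-> Df(x) v for every direction v) *)
Definition C1 (R : realType) (n : nat) (f : 'cV[R]_n -> R) : Prop :=
  forall x : 'cV[R]_n, differentiable f x /\
    forall v : 'cV[R]_n, continuous (fun y : 'cV[R]_n => 'd f y v).

Definition bounded_below (R : realType) (n : nat) (f : 'cV[R]_n -> R) : Prop :=
  exists c : R, forall x, c <= f x.

(* A real Hilbert space H of measurable functions R^n -> R^m: an abstract    *)
(* real vector space H with inner product ip, complete for the induced norm, *)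
(* together with an injective linear "evaluation" ev identifying each        *)
(* element of H with a measurable function R^n -> R^m.                       *)

Definition hnorm (R : realType) (H : lmodType R) (ip : H -> H -> R) (f : H) : R :=
  Num.sqrt (ip f f).

Record function_hilbert (R : realType) (n m : nat) (H : lmodType R)
    (ip : H -> H -> R) (ev : H -> 'cV[R]_n -> 'cV[R]_m) : Prop := {
  ip_sym : forall f g, ip f g = ip g f;
  ip_linear : forall (a : R) f g h, ip (a *: f + g) h = a * ip f h + ip g h;
  ip_pos : forall f, f != 0 -> 0 < ip f f;
  ip_complete : forall u : nat -> H,
    (forall e : R, 0 < e -> exists N, forall i j, (N <= i)%N -> (N <= j)%N ->
        hnorm ip (u i - u j) < e) ->
    exists l : H, forall e : R, 0 < e -> exists N, forall i, (N <= i)%N ->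
        hnorm ip (u i - l) < e;
  ev_linear : forall (a : R) f g x, ev (a *: f + g) x = a *: ev f x + ev g x;
  ev_inj : injective ev;
  ev_measurable : forall f, measurable_fun setT (ev f)
}.

Definition frechet_grad (R : realType) (H : lmodType R) (ip : H -> H -> R)
    (F : H -> R) (v G : H) : Prop :=
  forall e : R, 0 < e -> exists d : R, 0 < d /\
    forall h : H, hnorm ip h < d -> `|F (v + h) - F v - ip h G| <= e * hnorm ip h.

Definition upd (H : Type) (pol : nat -> H) (t : nat) (phi : H) : nat -> H :=
  fun s => if s == t then phi else pol s.

Section control.
Context (R : realType) (n m : nat) (T : nat) (A : 'M[R]_n) (B : 'M[R]_(n, m))
  (Q QF : 'M[R]_n) (Rc : 'M[R]_m) (psi psiF : 'cV[R]_n -> R)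
  (H : lmodType R) (ev : H -> 'cV[R]_n -> 'cV[R]_m).

Fixpoint cl_state (pol : nat -> H) (t : nat) (x0 : 'cV[R]_n) : 'cV[R]_n :=
  match t with
  | 0 => x0
  | t'.+1 => let x := cl_state pol t' x0 in A *m x + B *m ev (pol t') x
  end.

(* Vfrom pol s k x : cost-to-go from state x at time s with k steps left;
   V_t = Vfrom pol t (T - t), so V_T(x) = x^T QF x + psiF x and
   V_t(x) = x^T Q x + pi_t(x)^T Rc pi_t(x) + psi x + V_{t+1}(A x + B pi_t(x)) *)
Fixpoint Vfrom (pol : nat -> H) (s k : nat) (x : 'cV[R]_n) : R :=
  match k with
  | 0 => qf QF x + psiF x
  | k'.+1 => let u := ev (pol s) x in
      qf Q x + qf Rc u + psi x + Vfrom pol s.+1 k' (A *m x + B *m u)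
  end.

Definition Vt (pol : nat -> H) (t : nat) : 'cV[R]_n -> R := Vfrom pol t (T - t).

Definition stage_integrand (pol : nat -> H) (t : nat) (x0 : 'cV[R]_n) : R :=
  let x := cl_state pol t x0 in
  let u := ev (pol t) x in
  qf Q x + qf Rc u + psi x + Vt pol t.+1 (A *m x + B *m u).

Definition Jtil (p0 : probability 'cV[R]_n R) (pol : nat -> H) (t : nat) : R :=
  fine (\int[p0]_x0 (stage_integrand pol t x0)%:E)%E.

End control.

(* Main.v *)
Require Import Defs.
From HB Require Import structures.
From mathcomp Require Import all_boot all_order all_algebra.
From mathcomp Require Import all_classical all_reals all_analysis.
From mathcomp Require Import lra.
Import Order.TTheory GRing.Theory Num.Theory.
Import numFieldNormedType.Exports.
Local Open Scope classical_set_scope.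
Local Open Scope ring_scope.

Section helpers.
Context (R : realType) (n m : nat) (T : nat) (A : 'M[R]_n) (B : 'M[R]_(n, m))
  (Q QF : 'M[R]_n) (Rc : 'M[R]_m) (psi psiF : 'cV[R]_n -> R)
  (H : lmodType R) (ev : H -> 'cV[R]_n -> 'cV[R]_m).

Fixpoint flow (pol : nat -> H) (s j : nat) (x : 'cV[R]_n) : 'cV[R]_n :=
  match j with
  | 0 => x
  | j'.+1 => flow pol s.+1 j' (A *m x + B *m ev (pol s) x)
  end.

Lemma flowS pol j : forall s x,
  flow pol s j.+1 x = A *m flow pol s j x + B *m ev (pol (s + j)%N) (flow pol s j x).
Proof.
elim: j => [|j IH] s x; first by rewrite /= addn0.
change (flow pol s.+1 j.+1 (A *m x + B *m ev (pol s) x) = A *m flow pol s j.+1 x + B *m ev (pol (s + j.+1)%N) (flow pol s j.+1 x)).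
by rewrite IH addSnnS.
Qed.

Lemma cl_flow pol t x0 : cl_state A B ev pol t x0 = flow pol 0 t x0.
Proof. by elim: t => [|t IH] //; rewrite flowS -IH add0n. Qed.

Lemma cl_agree pol pol' t x0 : (forall s, (s < t)%N -> pol s = pol' s) ->
  cl_state A B ev pol t x0 = cl_state A B ev pol' t x0.
Proof.
elim: t => [|t IH] hs //=.
rewrite IH ?hs // => s hst; apply: hs; exact: ltnW.
Qed.

Lemma V_agree pol pol' k : forall s x, (forall i, (s <= i < s + k)%N -> pol i = pol' i) ->
  Vfrom A B Q QF Rc psi psiF ev pol s k x = Vfrom A B Q QF Rc psi psiF ev pol' s k x.
Proof.
elim: k => [|k IH] s x hs //=.
have -> : pol s = pol' s by apply: hs; rewrite leqnn /= addnS ltnS leq_addr.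
rewrite IH // => i /andP[h1 h2]; apply: hs.
by rewrite (ltnW h1) /= -addSnnS.
Qed.

Lemma V_diff pol pol' j : forall s k x, (j <= k)%N ->
  (forall i, (s <= i < s + j)%N -> pol i = pol' i) ->
  Vfrom A B Q QF Rc psi psiF ev pol s k x
   - Vfrom A B Q QF Rc psi psiF ev pol (s + j) (k - j) (flow pol s j x) =
  Vfrom A B Q QF Rc psi psiF ev pol' s k x
   - Vfrom A B Q QF Rc psi psiF ev pol' (s + j) (k - j) (flow pol' s j x).
Proof.
elim: j => [|j IH] s k x hjk hs; first by rewrite addn0 subn0 /= !subrr.
case: k hjk => [//|k] hjk /=.
have -> : pol s = pol' s by apply: hs; rewrite leqnn /= addnS ltnS leq_addr.
rewrite subSS -addSnnS.
have h := IH s.+1 k (A *m x + B *m ev (pol' s) x) hjk.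
rewrite -!addrA h //.
by move=> i /andP[h1 h2]; apply: hs; rewrite (ltnW h1) /= -addSnnS.
Qed.

Lemma stage_V pol t x0 : (t < T)%N ->
  stage_integrand T A B Q QF Rc psi psiF ev pol t x0 =
  Vfrom A B Q QF Rc psi psiF ev pol t (T - t) (cl_state A B ev pol t x0).
Proof. by move=> ht; rewrite /stage_integrand /Vt -(subnSK ht). Qed.

Lemma stage_agree pol pol' t x0 : (t < T)%N ->
  (forall s, (s < T)%N -> pol s = pol' s) ->
  stage_integrand T A B Q QF Rc psi psiF ev pol t x0 =
  stage_integrand T A B Q QF Rc psi psiF ev pol' t x0.
Proof.
move=> ht hs; rewrite !stage_V // (@cl_agree pol pol'); last first.
  by move=> s hst; apply: hs; exact: ltn_trans ht.
apply: V_agree => i /andP[_ h]; apply: hs; by rewrite subnKC ?(ltnW ht) in h.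
Qed.

Lemma stage_shift pol t a b x0 : (0 < T)%N -> (t < T)%N ->
  let pa := upd pol t a in let pb := upd pol t b in
  stage_integrand T A B Q QF Rc psi psiF ev pa 0 x0 +
  stage_integrand T A B Q QF Rc psi psiF ev pb t x0 =
  stage_integrand T A B Q QF Rc psi psiF ev pb 0 x0 +
  stage_integrand T A B Q QF Rc psi psiF ev pa t x0.
Proof.
move=> hT ht pa pb; rewrite !stage_V // !cl_flow subn0.
have hag : forall i, (0 <= i < 0 + t)%N -> pa i = pb i.
  by move=> i /andP[_ hi]; rewrite /pa /pb /upd (ltn_eqF hi).
have hd := @V_diff pa pb t 0 T x0 (ltnW ht) hag.
rewrite add0n in hd.
lra.
Qed.


Lemma qf_ge0 k (M : 'M[R]_k) : sym_posdef M -> forall x, 0 <= qf M x.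
Proof.
move=> [_ hp] x; have [->|hx] := eqVneq x 0; last exact/ltW/hp.
by rewrite /qf mulmx0 mxE.
Qed.
Arguments qf_ge0 {k M}.

Lemma V_lb pol c1 c2 : sym_posdef Q -> sym_posdef QF -> sym_posdef Rc ->
  (forall x, c1 <= psi x) -> (forall x, c2 <= psiF x) ->
  forall k s x, k%:R * c1 + c2 <= Vfrom A B Q QF Rc psi psiF ev pol s k x.
Proof.
move=> hQ hQF hRc h1 h2; elim=> [|k IH] s x /=.
  have := qf_ge0 hQF x; have := h2 x; lra.
have := qf_ge0 hQ x; have := qf_ge0 hRc (ev (pol s) x); have := h1 x.
have := IH s.+1 (A *m x + B *m ev (pol s) x).
rewrite mulrSr; lra.
Qed.

End helpers.

Theorem theorem1 (R : realType) (n m T : nat)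
  (A : 'M[R]_n) (B : 'M[R]_(n, m)) (p0 : probability 'cV[R]_n R)
  (Q QF : 'M[R]_n) (Rc : 'M[R]_m) (psi psiF : 'cV[R]_n -> R)
  (H : lmodType R) (ip : H -> H -> R) (ev : H -> 'cV[R]_n -> 'cV[R]_m)
  (DJ : nat -> (nat -> H) -> H -> H -> H) (delta : R)
  (pi : nat -> nat -> H) :
  (0 < T)%N ->
  sym_posdef Q -> sym_posdef QF -> sym_posdef Rc ->
  C1 psi -> C1 psiF -> bounded_below psi -> bounded_below psiF ->
  psi 0 = 0 -> psiF 0 = 0 ->
  function_hilbert ip ev ->
  let J := Jtil T A B Q QF Rc psi psiF ev p0 in
  (* the stage functionals are finite: the integrands are p0-integrable *)
  (forall (pol : nat -> H) (t : nat), (t < T)%N ->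
     p0.-integrable setT
       (fun x0 => (stage_integrand T A B Q QF Rc psi psiF ev pol t x0)%:E)) ->
  (* DJ t pol is a discrete Frechet derivative of phi |-> J(upd pol t phi) t *)
  (forall (t : nat) (pol : nat -> H) (phi vphi : H), (t < T)%N ->
     ip (phi - vphi) (DJ t pol phi vphi) =
     J (upd pol t phi) t - J (upd pol t vphi) t) ->
  (forall (t : nat) (pol : nat -> H) (vphi : H), (t < T)%N ->
     exists G : H, frechet_grad ip (fun phi => J (upd pol t phi) t) vphi G /\
       forall e : R, 0 < e -> exists d : R, 0 < d /\
         forall phi : H, hnorm ip (phi - vphi) < d ->
           hnorm ip (DJ t pol phi vphi - G) < e) ->
  0 < delta ->
  (* implicit backward update: at time t, earlier policies are still pi^k,
     later policies are already pi^{k+1} *)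
  (forall (k t : nat), (t < T)%N ->
     pi k.+1 t = pi k t - delta *:
       DJ t (fun s => if (s < t)%N then pi k s else pi k.+1 s)
            (pi k.+1 t) (pi k t)) ->
  (forall k : nat,
     J (pi k.+1) 0 - J (pi k) 0 =
       - delta^-1 * \sum_(t < T) hnorm ip (pi k.+1 t - pi k t) ^+ 2 /\
     - delta^-1 * \sum_(t < T) hnorm ip (pi k.+1 t - pi k t) ^+ 2 <= 0) /\
  (forall k : nat, J (pi k.+1) 0 <= J (pi k) 0) /\
  cvg ((fun k => J (pi k) 0) @ \oo) /\
  ((fun k => \sum_(t < T) hnorm ip (pi k.+1 t - pi k t) ^+ 2) @ \oo --> 0).
Proof.
move=> hT hQ hQF hRc _ _ [c1 hcS] [c2 hc2] _ _ hH J hint hDJ _ hdel hupd.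
have mT : measurable (@setT 'cV[R]_n) by [].
have shift : forall pol t a b, (t < T)%N ->
    J (upd pol t a) 0 - J (upd pol t b) 0 = J (upd pol t a) t - J (upd pol t b) t.
  move=> pol t a b ht.
  have i1 := hint (upd pol t a) 0 hT; have i2 := hint (upd pol t b) t ht.
  have i3 := hint (upd pol t b) 0 hT; have i4 := hint (upd pol t a) t ht.
  have e : (\int[p0]_x ((stage_integrand T A B Q QF Rc psi psiF ev (upd pol t a) 0 x)%:E
             + (stage_integrand T A B Q QF Rc psi psiF ev (upd pol t b) t x)%:E) =
           \int[p0]_x ((stage_integrand T A B Q QF Rc psi psiF ev (upd pol t b) 0 x)%:E
             + (stage_integrand T A B Q QF Rc psi psiF ev (upd pol t a) t x)%:E))%E.
    apply: eq_integral => x _; rewrite -!EFinD; congr EFin.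
    exact: stage_shift.
  rewrite !integralD // in e.
  have f1 := integrable_fin_num mT i1; have f2 := integrable_fin_num mT i2.
  have f3 := integrable_fin_num mT i3; have f4 := integrable_fin_num mT i4.
  have := congr1 fine e; rewrite (fineD f1 f2) (fineD f3 f4) /J /Jtil; lra.
pose L := T%:R * c1 + c2.
have Jlb : forall pol, L <= J pol 0.
  move=> pol; have hi := hint pol 0 hT.
  have fi := integrable_fin_num mT hi.
  rewrite /J /Jtil -lee_fin fineK //.
  have -> : (L%:E = \int[p0]_(x in setT) (EFin \o cst L) x)%E.
    rewrite (_ : EFin \o cst L = cst L%:E) // integral_cst //. rewrite -[in LHS](mule1 L%:E); congr (_ * _)%E; exact: (esym (probability_setT p0)).
  apply: le_integral => //; first exact: finite_measure_integrable_cst.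
  move=> x _ /=; rewrite lee_fin stage_V // subn0.
  exact: V_lb.
have ip0 : forall h, ip 0 h = 0.
  move=> h; have := ip_linear hH 1 0 0 h; rewrite scaler0 addr0 mul1r.
  move=> e; have : ip 0 h + ip 0 h = ip 0 h + 0 by rewrite -e addr0.
  by move/addrI.
have ipZ : forall (c : R) d, ip d (c *: d) = c * ip d d.
  move=> c d; rewrite (ip_sym hH); have := ip_linear hH c d 0 d.
  by rewrite addr0 ip0 addr0.
have hn2 : forall d, hnorm ip d ^+ 2 = ip d d.
  move=> d; rewrite /hnorm sqr_sqrtr //.
  have [->|hd] := eqVneq d 0; first by rewrite ip0.
  exact/ltW/(ip_pos hH).
pose pol k t := fun s => if (s < t)%N then pi k s else pi k.+1 s.
have key : forall k t, (t < T)%N ->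
    J (pol k t) 0 - J (pol k t.+1) 0 = - delta^-1 * hnorm ip (pi k.+1 t - pi k t) ^+ 2.
  move=> k t ht.
  have e1 : upd (pol k t) t (pi k.+1 t) = pol k t.
    apply: funext => s; rewrite /upd /pol.
    by have [->|ne] := eqVneq s t; [rewrite ?eqxx ?ltnn | rewrite ?(negbTE ne)].
  have e2 : upd (pol k t) t (pi k t) = pol k t.+1.
    apply: funext => s; rewrite /upd /pol ltnS.
    by case: ltngtP => // ->.
  rewrite -{1}e1 -e2 shift // -hDJ //.
  have hDJv : DJ t (pol k t) (pi k.+1 t) (pi k t) = - delta^-1 *: (pi k.+1 t - pi k t).
    rewrite {2}(hupd k t ht) addrAC subrr add0r scaleNr scalerN opprK scalerA.
    by rewrite mulVf ?gt_eqF // scale1r.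
  by rewrite hDJv ipZ hn2.
have main : forall k, J (pi k.+1) 0 - J (pi k) 0 =
    - delta^-1 * \sum_(t < T) hnorm ip (pi k.+1 t - pi k t) ^+ 2.
  move=> k.
  have g0 : pol k 0 = pi k.+1 by apply: funext => s; rewrite /pol ltn0.
  have gT : J (pol k T) 0 = J (pi k) 0.
    rewrite /J /Jtil; congr fine; apply: eq_integral => x _; congr EFin.
    by apply: stage_agree => // s hs; rewrite /pol hs.
  rewrite -g0 -gT.
  have tel : \sum_(0 <= t < T) (J (pol k t) 0 - J (pol k t.+1) 0) =
             J (pol k 0) 0 - J (pol k T) 0.
    rewrite -[RHS]opprB -(telescope_sumr (fun t => J (pol k t) 0)) // -sumrN.
    by apply: eq_bigr => i _; rewrite opprB.
  rewrite -tel big_mkord mulr_sumr; apply: eq_bigr => i _.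
  exact: key.
have Sge0 : forall k, 0 <= \sum_(t < T) hnorm ip (pi k.+1 t - pi k t) ^+ 2.
  by move=> k; apply: sumr_ge0 => i _; rewrite sqr_ge0.
have neg : forall k, - delta^-1 * \sum_(t < T) hnorm ip (pi k.+1 t - pi k t) ^+ 2 <= 0.
  move=> k; rewrite mulNr oppr_le0 mulr_ge0 // invr_ge0 ltW //.
have mono : forall k, J (pi k.+1) 0 <= J (pi k) 0.
  by move=> k; have := main k; have := neg k; lra.
have hc : cvg ((fun k => J (pi k) 0) @ \oo).
  apply: nonincreasing_is_cvgn; first exact/nonincreasing_seqP.
  by exists L => y [k _ <-]; exact: Jlb.
split; first by move=> k; split; [exact: main | exact: neg].
split; first exact: mono.
split; first exact: hc.
have eS : (fun k => \sum_(t < T) hnorm ip (pi k.+1 t - pi k t) ^+ 2) =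
          (fun k => delta * (J (pi k) 0 - J (pi k.+1) 0)).
  apply: funext => k; rewrite -opprB main mulNr opprK mulrA divff ?gt_eqF //.
  by rewrite mul1r.
rewrite eS.
have hshift : (fun k => J (pi k.+1) 0) @ \oo --> lim ((fun k => J (pi k) 0) @ \oo).
  by rewrite (cvg_shiftS (fun k => J (pi k) 0)).
have := cvgM (cvg_cst delta) (cvgB hc hshift).
rewrite subrr mulr0 => h; exact: (h _ _ _).
Qed.
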